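(* Let $S$ be a monoid, $A$ an $S$-act and $\Sigma=\Sigma(X)$ a consistent set of equations over $A$; identify $A$ with its image in $A(\Sigma)$ under $\nu_\Sigma$. The following are equivalent: (1) $\Sigma$ has a solution in $A$; (2) $A$ is a retract of $A(\Sigma)$; (3) the $S$-morphism $\theta:D(\Sigma)\to A$, $([xs]v)\theta=av$ for $xs=a\in\Sigma$, $v\in S$, extends to an $S$-morphism $C(\Sigma)\to A$.
   Context: A (right) $S$-act is a set $A$ with a map $A\times S\to A$ such that $a1=a$, $a(st)=(as)t$. $F_S(X)$ is the free $S$-act on $X$. An equation over $A$ with variables from $X$ has one of the forms $xs=yt$, $xs=xt$, $xs=a$ ($x,y\in X$, $s,t\in S$, $a\in A$); a solution in $B\supseteq A$ is a family $(b_x)$ in $B$ satisfying all equations; $\Sigma$ is consistent if it has a solution in some $S$-act containing $A$. $H(\Sigma)=\{(xu,yv):xu=yv\in\Sigma\}$, $K(\Sigma)=\{(xs,a):xs=a\in\Sigma\}$; $\rho_\Sigma$ is the congruence on $F_S(X)$ generated by $H(\Sigma)$, $\kappa_\Sigma$ that on $A\sqcup F_S(X)$ generated by $H(\Sigma)\cup K(\Sigma)$; $A(\Sigma)=(A\sqcup F_S(X))/\kappa_\Sigma$, $C(\Sigma)=F_S(X)/\rho_\Sigma$, $D(\Sigma)=\bigcup_{xs=a\in\Sigma}[xs]S\subseteq C(\Sigma)$, $\nu_\Sigma:A\to A(\Sigma)$, $a\mapsto[a]$, which is injective when $\Sigma$ is consistent, and $\theta$ is then a well-defined $S$-morphism.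 $A$ is a retract of $A(\Sigma)$ if there is an $S$-morphism $A(\Sigma)\to A$ which is the identity on $A$. *)

(* Defs.v *)
From Stdlib Require Import ClassicalEpsilon.

Set Implicit Arguments.

Record monoid := Monoid {
  mcar :> Type;
  mmul : mcar -> mcar -> mcar;
  mone : mcar;
  mmulA : forall a b c, mmul a (mmul b c) = mmul (mmul a b) c;
  mmul1l : forall a, mmul mone a = a;
  mmul1r : forall a, mmul a mone = a
}.

Record act (S : monoid) := Act {
  acar :> Type;
  aop : acar -> S -> acar;
  aop1 : forall a, aop a (mone S) = a;
  aopM : forall a s t, aop a (mmul S s t) = aop (aop a s) t
}.
Arguments aop {S a0} _ _.

(** S-morphisms between sets carrying a right action of S
    (given here by the raw action maps, so that they can be used for
    quotient acts as well). *)
Definition is_morph (S : monoid) (T U : Type)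
  (opT : T -> S -> T) (opU : U -> S -> U) (f : T -> U) : Prop :=
  forall t s, f (opT t s) = opU (f t) s.

Inductive equation (S : monoid) (A : act S) (X : Type) :=
| EqVV : X -> S -> X -> S -> equation A X   (* x s = y t *)
| EqVC : X -> S -> A -> equation A X.       (* x s = a   *)

Arguments EqVV {S A X} _ _ _ _.
Arguments EqVC {S A X} _ _ _.

Definition system (S : monoid) (A : act S) (X : Type) := equation A X -> Prop.

Definition is_solution (S : monoid) (A B : act S) (X : Type)
  (iota : A -> B) (Sigma : system A X) (b : X -> B) : Prop :=
  (forall x s y t, Sigma (EqVV x s y t) -> aop (b x) s = aop (b y) t) /\
  (forall x s a, Sigma (EqVC x s a) -> aop (b x) s = iota a).

Definition consistent (S : monoid) (A : act S) (X : Type)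
  (Sigma : system A X) : Prop :=
  exists (B : act S) (iota : A -> B),
    @is_morph S A B aop aop iota /\
    (forall a a', iota a = iota a' -> a = a') /\
    exists b : X -> B, @is_solution S A B X iota Sigma b.

(** Free S-act F_S(X) = X x S with (x,s)t = (x,st); x s is (x,s). *)
Definition free_act (S : monoid) (X : Type) := (X * S)%type.
Definition free_op (S : monoid) (X : Type) (p : free_act S X) (t : S)
  : free_act S X := (fst p, mmul S (snd p) t).

Definition sum_op (S : monoid) (A : act S) (X : Type)
  (p : (A + free_act S X)%type) (t : S) : (A + free_act S X)%type :=
  match p with
  | inl a => inl (aop a t)
  | inr q => inr (free_op q t)
  end.

Inductive cong_gen (S : monoid) (T : Type) (op : T -> S -> T)
  (H : T -> T -> Prop) : T -> T -> Prop :=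
| cg_base : forall u v, H u v -> cong_gen S op H u v
| cg_refl : forall u, cong_gen S op H u u
| cg_sym : forall u v, cong_gen S op H u v -> cong_gen S op H v u
| cg_trans : forall u v w,
    cong_gen S op H u v -> cong_gen S op H v w -> cong_gen S op H u w
| cg_act : forall u v s, cong_gen S op H u v -> cong_gen S op H (op u s) (op v s).

Record quot (T : Type) (R : T -> T -> Prop) := Quot {
  qclass : T -> Prop;
  qclassP : exists u, qclass = R u
}.

Definition cls (T : Type) (R : T -> T -> Prop) (u : T) : quot R :=
  @Quot T R (R u) (ex_intro _ u eq_refl).

Definition rep (T : Type) (R : T -> T -> Prop) (q : quot R) : T :=
  proj1_sig (constructive_indefinite_description _ (qclassP q)).

Definition quot_op (S : monoid) (T : Type) (op : T -> S -> T)
  (R : T -> T -> Prop) (q : quot R) (s : S) : quot R :=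
  cls R (op (rep q) s).

Section Sigma.
Variables (S : monoid) (A : act S) (X : Type) (Sigma : system A X).

Definition H_rel (u v : free_act S X) : Prop :=
  exists x s y t, Sigma (EqVV x s y t) /\ u = (x, s) /\ v = (y, t).

Definition HK_rel (u v : (A + free_act S X)%type) : Prop :=
  (exists x s y t, Sigma (EqVV x s y t) /\ u = inr (x, s) /\ v = inr (y, t)) \/
  (exists x s a, Sigma (EqVC x s a) /\ u = inr (x, s) /\ v = inl a).

Definition rho : free_act S X -> free_act S X -> Prop :=
  @cong_gen S (free_act S X) (@free_op S X) H_rel.

Definition kappa : (A + free_act S X) -> (A + free_act S X) -> Prop :=
  @cong_gen S (A + free_act S X) (@sum_op S A X) HK_rel.

Definition ASigma := quot kappa.
Definition ASigma_op : ASigma -> S -> ASigma := @quot_op S _ (@sum_op S A X) kappa.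

Definition CSigma := quot rho.
Definition CSigma_op : CSigma -> S -> CSigma := @quot_op S _ (@free_op S X) rho.

Definition nu (a : A) : ASigma := cls kappa (inl a).

Definition DSigma (c : CSigma) : Prop :=
  exists x s a v, Sigma (EqVC x s a) /\ c = CSigma_op (cls rho (x, s)) v.

(** The graph of theta : D(Sigma) -> A,  ([xs]v)theta = a v  for xs = a in
    Sigma, v in S (a well-defined map when Sigma is consistent). *)
Definition theta_graph (c : CSigma) (b : A) : Prop :=
  exists x s a v, Sigma (EqVC x s a) /\
    c = CSigma_op (cls rho (x, s)) v /\ b = aop a v.

End Sigma.

(* Main.v *)
Require Import Defs.
From Stdlib Require Import FunctionalExtensionality PropExtensionality ProofIrrelevance ClassicalEpsilon.

Section Q.
Variables (S : monoid) (T : Type) (op : T -> S -> T) (H : T -> T -> Prop).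
Let C := cong_gen S op H.

Lemma quot_ext (q1 q2 : quot C) : qclass q1 = qclass q2 -> q1 = q2.
Proof.
  destruct q1 as [c1 p1], q2 as [c2 p2]; simpl; intros E; subst.
  f_equal; apply proof_irrelevance.
Qed.

Lemma cls_eq u v : C u v -> cls C u = cls C v.
Proof.
  intros Huv; apply quot_ext; simpl.
  apply functional_extensionality; intros w; apply propositional_extensionality.
  split; intros Hw.
  - eapply cg_trans; [apply cg_sym; exact Huv| exact Hw].
  - eapply cg_trans; [exact Huv| exact Hw].
Qed.

Lemma rep_spec (q : quot C) : qclass q = C (rep q).
Proof.
  unfold rep; destruct (constructive_indefinite_description _ _) as [r Hr]; exact Hr.
Qed.

Lemma rep_cls u : C u (rep (cls C u)).
Proof.
  pose proof (rep_spec (cls C u)) as E; simpl in E.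
  rewrite E; apply cg_refl.
Qed.

Lemma cls_rep (q : quot C) : cls C (rep q) = q.
Proof. apply quot_ext; simpl; symmetry; apply rep_spec. Qed.

Lemma quot_op_cls u s : @quot_op S T op C (cls C u) s = cls C (op u s).
Proof.
  unfold quot_op; apply cls_eq; apply cg_act; apply cg_sym; apply rep_cls.
Qed.

Lemma lift_cls (B : Type) (h : T -> B) :
  (forall u v, C u v -> h u = h v) -> forall u, h (rep (cls C u)) = h u.
Proof. intros Hh u; symmetry; apply Hh; apply rep_cls. Qed.
End Q.

Theorem mainTheorem11 (S : monoid) (A : act S) (X : Type)
  (Sigma : system A X) (Hcons : consistent Sigma) :
  ((* (1) Sigma has a solution in A *)
   (exists b : X -> A, @is_solution S A A X (fun a : A => a) Sigma b) <->
   (* (2) A (identified with nu_Sigma(A)) is a retract of A(Sigma) *)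
   (exists f : ASigma Sigma -> A,
      @is_morph S (ASigma Sigma) A (@ASigma_op S A X Sigma) aop f /\
      forall a : A, f (nu Sigma a) = a)) /\
  ((exists f : ASigma Sigma -> A,
      @is_morph S (ASigma Sigma) A (@ASigma_op S A X Sigma) aop f /\
      forall a : A, f (nu Sigma a) = a) <->
   (* (3) theta : D(Sigma) -> A extends to an S-morphism C(Sigma) -> A *)
   (exists g : CSigma Sigma -> A,
      @is_morph S (CSigma Sigma) A (@CSigma_op S A X Sigma) aop g /\
      forall (c : CSigma Sigma) (b : A), @theta_graph S A X Sigma c b -> g c = b)).
Proof.
  clear Hcons.
  assert (H12 : (exists b : X -> A, @is_solution S A A X (fun a : A => a) Sigma b) ->
   (exists f : ASigma Sigma -> A,
      @is_morph S (ASigma Sigma) A (@ASigma_op S A X Sigma) aop f /\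
      forall a : A, f (nu Sigma a) = a)).
  { intros [b [Hb1 Hb2]].
    set (h := fun p : (A + free_act S X)%type =>
               match p with inl a => a | inr (x, s) => aop (b x) s end).
    assert (Hh : forall u v, kappa Sigma u v -> h u = h v).
    { intros u v K; induction K as [u v Hb|u|u v _ IH|u v w _ IH1 _ IH2|u v s _ IH].
      - destruct Hb as [(x&s&y&t&E&->&->)|(x&s&a&E&->&->)]; simpl; eauto.
      - reflexivity.
      - auto.
      - congruence.
      - destruct u as [a|[x t]], v as [a'|[y t']]; simpl in *;
          rewrite ?aopM; congruence. }
    exists (fun q => h (rep q)); split.
    - intros q s. unfold ASigma_op, quot_op.
      rewrite (@lift_cls _ _ _ _ _ h Hh).
      destruct (rep q) as [a|[x t]]; simpl; rewrite ?aopM; reflexivity.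
    - intros a; unfold nu; rewrite (@lift_cls _ _ _ _ _ h Hh); reflexivity. }
  assert (H31 : (exists g : CSigma Sigma -> A,
      @is_morph S (CSigma Sigma) A (@CSigma_op S A X Sigma) aop g /\
      forall (c : CSigma Sigma) (b : A), @theta_graph S A X Sigma c b -> g c = b) ->
      (exists b : X -> A, @is_solution S A A X (fun a : A => a) Sigma b)).
  { intros [g [Hg Ht]].
    assert (Hgs : forall x s, aop (g (cls (rho Sigma) (x, mone S))) s = g (cls (rho Sigma) (x, s))).
    { intros x s; rewrite <- Hg; unfold CSigma_op, rho; rewrite quot_op_cls.
      unfold free_op; simpl; rewrite mmul1l; reflexivity. }
    exists (fun x => g (cls (rho Sigma) (x, mone S))); split.
    - intros x s y t E; rewrite !Hgs; f_equal; apply cls_eq; apply cg_base.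
      exists x, s, y, t; auto.
    - intros x s a E; rewrite Hgs; apply Ht.
      exists x, s, a, (mone S); split; [exact E|split].
      + unfold CSigma_op, rho; rewrite quot_op_cls; unfold free_op; simpl; rewrite mmul1r; reflexivity.
      + symmetry; apply aop1. }
  assert (H21 : (exists f : ASigma Sigma -> A,
      @is_morph S (ASigma Sigma) A (@ASigma_op S A X Sigma) aop f /\
      forall a : A, f (nu Sigma a) = a) ->
      (exists b : X -> A, @is_solution S A A X (fun a : A => a) Sigma b)).
  { intros [f [Hf Hn]].
    assert (Hfs : forall x s, aop (f (cls (kappa Sigma) (inr (x, mone S)))) s
                              = f (cls (kappa Sigma) (inr (x, s)))).
    { intros x s; rewrite <- Hf; unfold ASigma_op, kappa; rewrite quot_op_cls.
      simpl; unfold free_op; simpl; rewrite mmul1l; reflexivity. }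
    exists (fun x => f (cls (kappa Sigma) (inr (x, mone S)))); split.
    - intros x s y t E; rewrite !Hfs; f_equal; apply cls_eq; apply cg_base.
      left; exists x, s, y, t; auto.
    - intros x s a E; rewrite Hfs; rewrite <- (Hn a); unfold nu; f_equal.
      apply cls_eq; apply cg_base; right; exists x, s, a; auto. }
  split; [split; auto|split; [|intros; apply H12; auto]].
  intros [f [Hf Hn]].
  set (h := fun u : free_act S X => f (cls (kappa Sigma) (inr u))).
  assert (Hh : forall u v, rho Sigma u v -> h u = h v).
  { intros u v K; unfold h; f_equal; apply cls_eq.
    induction K as [u v Hb|u|u v _ IH|u v w _ IH1 _ IH2|u v s _ IH].
    - apply cg_base; left; destruct Hb as (x&s&y&t&E&->&->); exists x, s, y, t; auto.
    - apply cg_refl.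
    - apply cg_sym; auto.
    - eapply cg_trans; eauto.
    - exact (cg_act s IH). }
  exists (fun q => h (rep q)); split.
  - intros q s; unfold CSigma_op, quot_op; rewrite (@lift_cls _ _ _ _ _ h Hh).
    unfold h; rewrite <- Hf; unfold ASigma_op, kappa; rewrite quot_op_cls; reflexivity.
  - intros c b (x&s&a&v&E&->&->).
    unfold CSigma_op, rho; rewrite quot_op_cls, (@lift_cls _ _ _ _ _ h Hh); unfold h.
    change (inr (free_op (x, s) v)) with (@sum_op S A X (inr (x, s)) v).
    unfold kappa; rewrite <- quot_op_cls; change (f (ASigma_op (cls (kappa Sigma) (inr (x, s))) v) = aop a v); rewrite Hf.
    f_equal; rewrite <- (Hn a); unfold nu; f_equal.
    apply cls_eq; apply cg_base; right; exists x, s, a; auto.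
Qed.
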